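(* Let $\beta=\gamma^2/(2\kappa\sigma^2)$ and define, for $t>0$ and $z\ge c$, $$U(t,z)=\frac1\beta\log\Bigg(\mathrm{erf}\Big(\frac{z-c}{\sigma\sqrt{2t}}\Big)+e^{-\beta(z-c)+\beta^2\sigma^2t/2}\bigg[1-\mathrm{erf}\Big(\frac{z-c}{\sigma\sqrt{2t}}-\frac{\beta\sigma\sqrt t}{\sqrt2}\Big)\bigg]\Bigg).$$ Then $U$ satisfies $$\partial_t U(t,z)=\frac{\sigma^2}2\partial_{zz}U(t,z)+\frac{\gamma^2}{4\kappa}\big(\partial_zU(t,z)\big)^2\qquad\text{in }(0,T]\times[c,\infty),$$ with boundary condition $\partial_zU(t,c)=-1$ for all $t\in(0,T]$.
   Context: $\sigma,\gamma,\kappa,T>0$ and $c\in\mathbb R$ are constants; $\mathrm{erf}(x)=\frac{2}{\sqrt\pi}\int_0^xe^{-y^2}\,dy$ is the Gaussian error function. (This $U$ coincides with $\frac1\beta\log E[\exp(\beta\sigma L_t^{(z-c)/\sigma}(W))]$ for a standard Brownian motion $W$ with local time $L$.) *)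

(* Defs.v *)
From Stdlib Require Import Reals.
From Coquelicot Require Import Coquelicot.
Open Scope R_scope.

Definition erf (x : R) : R :=
  2 / sqrt PI * RInt (fun y => exp (- y ^ 2)) 0 x.

Definition beta (sigma gamma kappa : R) : R :=
  gamma ^ 2 / (2 * kappa * sigma ^ 2).

Definition U (sigma gamma kappa c : R) (t z : R) : R :=
  let b := beta sigma gamma kappa in
  / b * ln ( erf ((z - c) / (sigma * sqrt (2 * t)))
             + exp (- b * (z - c) + b ^ 2 * sigma ^ 2 * t / 2)
               * (1 - erf ((z - c) / (sigma * sqrt (2 * t))
                           - b * sigma * sqrt t / sqrt 2)) ).

Definition dtU (sigma gamma kappa c t z : R) : R :=
  Derive (fun s => U sigma gamma kappa c s z) t.
Definition dzU (sigma gamma kappa c t z : R) : R :=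
  Derive (fun y => U sigma gamma kappa c t y) z.
Definition dzzU (sigma gamma kappa c t z : R) : R :=
  Derive (fun y => dzU sigma gamma kappa c t y) z.

(* Main.v *)
Require Import Defs.
From Stdlib Require Import Reals Lra Psatz.
From Coquelicot Require Import Coquelicot.
Open Scope R_scope.

Ltac dcont f := apply (ex_derive_continuous f); auto_derive.

Lemma exRInt_c : forall (f : R -> R) a b, (forall x, continuous f x) -> @ex_RInt R_CompleteNormedModule f a b.
Proof. intros f a b H; apply (@ex_RInt_continuous R_CompleteNormedModule); intros; apply H. Qed.

Definition gI (y : R) := RInt (fun s => exp (- s ^ 2)) 0 y.

Lemma gauss_cont : forall x, continuous (fun s => exp (- s ^ 2)) x.
Proof. intros x; dcont (fun s => exp (- s ^ 2)); auto. Qed.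

Lemma gauss_exRInt : forall a b, ex_RInt (fun s => exp (- s ^ 2)) a b.
Proof. intros; apply exRInt_c; intros; apply gauss_cont. Qed.

Lemma gI_deriv : forall y, is_derive gI y (exp (- y ^ 2)).
Proof.
  intros y. apply (is_derive_RInt (fun s => exp (- s ^ 2)) gI 0 y).
  - apply filter_forall. intros b. apply (@RInt_correct R_CompleteNormedModule), gauss_exRInt.
  - apply gauss_cont.
Qed.

Definition gf (y u : R) := exp (- (y ^ 2 * (1 + u ^ 2))) / (1 + u ^ 2).
Definition gJ (y : R) := RInt (fun u => gf y u) 0 1.

Lemma gf_deriv : forall y u, is_derive (fun z => gf z u) y (- 2 * y * exp (- (y ^ 2 * (1 + u ^ 2)))).
Proof.
  intros y u. unfold gf. auto_derive.
  - nra.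
  - replace (- (y * (y * 1) * (1 + u * (u * 1)))) with (- (y ^ 2 * (1 + u ^ 2))) by ring. field. nra.
Qed.

Lemma gf_cont : forall y u, continuous (gf y) u.
Proof. intros y u; unfold gf; dcont (fun u => exp (- (y ^ 2 * (1 + u ^ 2))) / (1 + u ^ 2)); nra. Qed.

Lemma gJ_deriv : forall y, is_derive gJ y (RInt (fun u => - 2 * y * exp (- (y ^ 2 * (1 + u ^ 2)))) 0 1).
Proof.
  intros y. unfold gJ.
  assert (E : RInt (fun u => - 2 * y * exp (- (y ^ 2 * (1 + u ^ 2)))) 0 1 =
              RInt (fun t => Derive (fun u => gf u t) y) 0 1).
  { apply RInt_ext. intros x _. symmetry. apply is_derive_unique, gf_deriv. }
  rewrite E. apply is_derive_RInt_param.
  - apply filter_forall. intros x t _. eexists; apply gf_deriv.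
  - intros t _. apply continuity_2d_pt_ext with (fun u v => - 2 * u * exp (- (u ^ 2 * (1 + v ^ 2)))).
    + intros; symmetry; apply is_derive_unique, gf_deriv.
    + apply continuity_2d_pt_mult.
      * apply continuity_2d_pt_mult. apply continuity_2d_pt_const. apply continuity_2d_pt_id1.
      * apply continuity_1d_2d_pt_comp. apply derivable_continuous_pt, derivable_pt_exp.
        apply continuity_2d_pt_opp. apply continuity_2d_pt_mult.
        -- apply continuity_2d_pt_ext with (fun u v => u * u).
           intros; ring. apply continuity_2d_pt_mult; apply continuity_2d_pt_id1.
        -- apply continuity_2d_pt_plus. apply continuity_2d_pt_const.
           apply continuity_2d_pt_ext with (fun u v => v * v).
           intros; ring. apply continuity_2d_pt_mult; apply continuity_2d_pt_id2.
  - apply filter_forall. intros x. apply exRInt_c. intros; apply gf_cont.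
Qed.

Lemma gI_lin : forall y, gI y = y * RInt (fun u => exp (- (y * u + 0) ^ 2)) 0 1.
Proof.
  intros y. unfold gI.
  assert (H := RInt_comp_lin (fun s => exp (- s ^ 2)) y 0 0 1 (gauss_exRInt _ _)).
  replace (y*0+0) with 0 in H by ring. replace (y*1+0) with y in H by ring.
  rewrite <- H.
  rewrite (RInt_scal (fun u => exp (- (y * u + 0) ^ 2)) 0 1 y). reflexivity.
  apply exRInt_c. intros; dcont (fun u => exp (- (y * u + 0) ^ 2)); auto.
Qed.

Lemma gF_deriv : forall y, is_derive (fun y => gI y ^ 2 + gJ y) y 0.
Proof.
  intros y.
  assert (H1 : is_derive (fun y => gI y ^ 2 + gJ y) y
    (2 * gI y * exp (- y ^ 2) + RInt (fun u => - 2 * y * exp (- (y ^ 2 * (1 + u ^ 2)))) 0 1)).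
  { apply (is_derive_plus (fun y => gI y ^ 2) gJ).
    - assert (Hc := is_derive_comp (fun x => x ^ 2) gI y (INR 2 * 1 * gI y ^ Init.Nat.pred 2) _
                     (is_derive_pow (fun x => x) 2 (gI y) 1 (is_derive_id _)) (gI_deriv y)).
      replace (2 * gI y * exp (- y ^ 2)) with (scal (exp (- y ^ 2)) (INR 2 * 1 * gI y ^ Init.Nat.pred 2)).
      exact Hc. unfold scal; simpl; unfold mult; simpl; ring.
    - apply gJ_deriv. }
  replace 0 with (2 * gI y * exp (- y ^ 2) + RInt (fun u => - 2 * y * exp (- (y ^ 2 * (1 + u ^ 2)))) 0 1).
  exact H1.
  rewrite gI_lin.
  rewrite (RInt_ext (fun u => - 2 * y * exp (- (y ^ 2 * (1 + u ^ 2)))) (fun u => scal (- 2 * y * exp (- y ^ 2)) (exp (- (y * u + 0) ^ 2)))).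
  2:{ intros x _. unfold scal; simpl; unfold mult; simpl.
      replace (-(y*(y*1)*(1+x*(x*1)))) with (-(y*(y*1)) + -((y*x+0)*((y*x+0)*1))) by ring. rewrite exp_plus; ring. }
  rewrite (@RInt_scal R_CompleteNormedModule). change (scal (-2 * y * exp (- y ^ 2)) (RInt (fun u : R => exp (- (y * u + 0) ^ 2)) 0 1)) with ((-2 * y * exp (- y ^ 2)) * (RInt (fun u : R => exp (- (y * u + 0) ^ 2)) 0 1)). ring.
  apply exRInt_c. intros; dcont (fun u => exp (- (y * u + 0) ^ 2)); auto.
Qed.

Lemma gF_const : forall y, gI y ^ 2 + gJ y = PI / 4.
Proof.
  intros y.
  assert (H := is_RInt_derive (fun y => gI y ^ 2 + gJ y) (fun _ => 0) 0 y
     (fun x _ => gF_deriv x) (fun x _ => continuous_const (0:R) x)).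
  apply is_RInt_unique in H. rewrite RInt_const in H.
  unfold scal, minus, plus, opp in H; simpl in H; unfold mult in H; simpl in H.
  assert (H0 : gI 0 ^ 2 + gJ 0 = PI / 4).
  { unfold gI. rewrite RInt_point. unfold zero; simpl.
    unfold gJ. rewrite (RInt_ext (fun u => gf 0 u) (fun u => / (1 + u²))).
    2:{ intros x _. unfold gf. replace (- (0 ^ 2 * (1 + x ^ 2))) with 0 by ring.
        change (exp 0 / (1 + x ^ 2) = / (1 + x²) :> R).
        rewrite exp_0. unfold Rsqr. field. nra. }
    assert (Hc : forall x : R, Rmin 0 1 <= x <= Rmax 0 1 -> continuous (fun u : R => / (1 + u²)) x).
    { intros x _. dcont (fun u => / (1 + u²)). unfold Rsqr; nra. }
    assert (H2 := is_RInt_derive atan (fun u => / (1 + u²)) 0 1 (fun x _ => is_derive_atan x) Hc).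
    rewrite (is_RInt_unique _ _ _ _ H2).
    unfold minus, plus, opp; simpl. rewrite atan_1, atan_0. ring. }
  lra.
Qed.

Lemma gJ_ge0 : forall y, 0 <= gJ y.
Proof.
  intros y. unfold gJ. apply RInt_ge_0. lra.
  apply exRInt_c. intros; apply gf_cont.
  intros x _. unfold gf. apply Rle_mult_inv_pos. left; apply exp_pos. nra.
Qed.

Lemma gI_sq : forall y, gI y ^ 2 <= PI / 4.
Proof. intros y. generalize (gF_const y) (gJ_ge0 y). lra. Qed.

Lemma erf_gI : forall y, erf y = 2 / sqrt PI * gI y.
Proof. reflexivity. Qed.

Lemma sqrtPI_pos : 0 < sqrt PI.
Proof. apply sqrt_lt_R0, PI_RGT_0. Qed.

Lemma erf_bound : forall y, -1 <= erf y <= 1.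
Proof.
  intros y. rewrite erf_gI. assert (H := gI_sq y). assert (Hs := sqrtPI_pos).
  assert (Hss : sqrt PI * sqrt PI = PI) by (apply sqrt_sqrt; left; apply PI_RGT_0).
  set (g := gI y) in *. set (s := sqrt PI) in *.
  assert (4 * g * g <= s * s) by (rewrite Hss; simpl in H; lra).
  assert (-s <= 2 * g <= s) by nra.
  split.
  - apply (Rmult_le_reg_r s); auto. unfold Rdiv. field_simplify; lra.
  - apply (Rmult_le_reg_r s); auto. unfold Rdiv. field_simplify; lra.
Qed.

Lemma erf_0 : erf 0 = 0.
Proof. rewrite erf_gI. unfold gI. rewrite RInt_point. unfold zero; simpl. ring. Qed.

Lemma erf_pos : forall y, 0 < y -> 0 < erf y.
Proof.
  intros y Hy. rewrite erf_gI. apply Rmult_lt_0_compat.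
  apply Rdiv_lt_0_compat. lra. apply sqrtPI_pos.
  unfold gI. apply RInt_gt_0. auto. intros; apply exp_pos. intros; apply gauss_cont.
Qed.

Lemma erf_nonpos : forall y, y <= 0 -> erf y <= 0.
Proof.
  intros y Hy. rewrite erf_gI.
  assert (0 <= RInt (fun s => exp (- s ^ 2)) y 0).
  { apply RInt_ge_0. auto. apply gauss_exRInt. intros; left; apply exp_pos. }
  unfold gI. rewrite <- (opp_RInt_swap (V:=R_CompleteNormedModule)) by apply gauss_exRInt.
  set (I0 := RInt (fun s => exp (- s ^ 2)) y 0) in *.
  unfold opp; simpl.
  assert (0 < 2 / sqrt PI) by (apply Rdiv_lt_0_compat; [lra| apply sqrtPI_pos]).
  nra.
Qed.

Lemma erf_deriv : forall y, is_derive erf y (2 / sqrt PI * exp (- y ^ 2)).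
Proof.
  intros y. apply is_derive_ext with (fun y => 2 / sqrt PI * gI y).
  intros; reflexivity. apply is_derive_scal, gI_deriv.
Qed.

Lemma erf_comp : forall p x dp, is_derive p x dp ->
  is_derive (fun s => erf (p s)) x (dp * (2 / sqrt PI * exp (- (p x) ^ 2))).
Proof.
  intros p x dp H. apply (is_derive_comp erf p x _ dp (erf_deriv (p x)) H).
Qed.

Ltac req := match goal with |- ?a = ?b => change (@eq R a b) end.

Ltac simplR := repeat match goal with
  | |- context [plus ?x ?y] => change (plus x y) with (Rplus x y)
  | |- context [minus ?x ?y] => change (minus x y) with (Rminus x y)
  | |- context [opp ?x] => change (opp x) with (Ropp x)
  | |- context [mult ?x ?y] => change (mult x y) with (Rmult x y)
  | |- context [scal ?x ?y] => change (scal x y) with (Rmult x y)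
  | |- context [@zero ?T] => change (@zero T) with R0
  end.

Lemma is_derive_eq : forall (f : R -> R) x l l', is_derive f x l -> l = l' -> is_derive f x l'.
Proof. intros; subst; auto. Qed.

Lemma exp_comp : forall p x dp, is_derive p x dp ->
  is_derive (fun s => exp (p s)) x (dp * exp (p x)).
Proof. intros p x dp H. apply (is_derive_comp exp p x _ dp (is_derive_exp (p x)) H). Qed.

Lemma ln_comp : forall p x dp, is_derive p x dp -> 0 < p x ->
  is_derive (fun s => ln (p s)) x (dp * / p x).
Proof. intros p x dp H Hp. apply (is_derive_comp ln p x _ dp (is_derive_ln (p x) Hp) H). Qed.

Lemma sqrt_div2 : forall t, sqrt t / sqrt 2 = sqrt (2 * t) / 2.
Proof.
  intros t. destruct (Rle_or_lt 0 t) as [H|H].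
  - rewrite sqrt_mult by lra.
    assert (H2 : sqrt 2 * sqrt 2 = 2) by (apply sqrt_sqrt; lra).
    assert (0 < sqrt 2) by (apply sqrt_lt_R0; lra).
    replace (sqrt 2 * sqrt t / 2) with (sqrt 2 * sqrt t / (sqrt 2 * sqrt 2)) by (rewrite H2; reflexivity). field. lra.
  - rewrite (sqrt_neg_0 t), (sqrt_neg_0 (2*t)) by lra. field. apply Rgt_not_eq, Rlt_gt, sqrt_lt_R0. lra.
Qed.

Definition Pf s c t z := (z - c) / (s * sqrt (2 * t)).
Definition Qf s b c t z := Pf s c t z - b * s * sqrt (2 * t) / 2.
Definition Exf s b c t z := exp (- b * (z - c) + b ^ 2 * s ^ 2 * t / 2).
Definition Vf s b c t z := erf (Pf s c t z) + Exf s b c t z * (1 - erf (Qf s b c t z)).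

Lemma U_eq : forall s g k c t z, U s g k c t z = / beta s g k * ln (Vf s (beta s g k) c t z).
Proof.
  intros. unfold U, Vf, Qf, Pf, Exf. cbv zeta.
  replace (beta s g k * s * sqrt t / sqrt 2) with (beta s g k * s * sqrt (2 * t) / 2). reflexivity.
  assert (E := sqrt_div2 t). unfold Rdiv in *. rewrite !Rmult_assoc, E. reflexivity.
Qed.

Lemma ident : forall s b c t z, 0 < s -> 0 < t ->
  Exf s b c t z * exp (- (Qf s b c t z) ^ 2) = exp (- (Pf s c t z) ^ 2).
Proof.
  intros s b c t z Hs Ht. unfold Exf, Qf, Pf. rewrite <- exp_plus. f_equal.
  assert (H2 : 0 < sqrt (2 * t)) by (apply sqrt_lt_R0; lra).
  assert (H3 : sqrt (2 * t) * sqrt (2 * t) = 2 * t) by (apply sqrt_sqrt; lra).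
  set (r := sqrt (2 * t)) in *. clearbody r.
  replace t with (r * r / 2) by lra. field. lra.
Qed.

Lemma dP_z : forall s c t z, 0 < s -> 0 < t ->
  is_derive (fun y => Pf s c t y) z (/ (s * sqrt (2 * t))).
Proof.
  intros s c t z Hs Ht. assert (H2 : 0 < sqrt (2 * t)) by (apply sqrt_lt_R0; lra).
  unfold Pf. auto_derive. nra. field. lra.
Qed.

Lemma dQ_z : forall s b c t z, 0 < s -> 0 < t ->
  is_derive (fun y => Qf s b c t y) z (/ (s * sqrt (2 * t))).
Proof.
  intros s b c t z Hs Ht. assert (H2 : 0 < sqrt (2 * t)) by (apply sqrt_lt_R0; lra).
  unfold Qf, Pf. auto_derive. nra. field. lra.
Qed.

Lemma dE_z : forall s b c t z,
  is_derive (fun y => Exf s b c t y) z (- b * Exf s b c t z).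
Proof.
  intros s b c t z. unfold Exf.
  eapply is_derive_eq.
  apply (exp_comp (fun y => - b * (y - c) + b ^ 2 * s ^ 2 * t / 2)).
  auto_derive. auto. reflexivity. req; ring.
Qed.

Lemma dV_z : forall s b c t z, 0 < s -> 0 < t ->
  is_derive (fun y => Vf s b c t y) z (- b * Exf s b c t z * (1 - erf (Qf s b c t z))).
Proof.
  intros s b c t z Hs Ht.
  assert (H1 := erf_comp _ z _ (dP_z s c t z Hs Ht)).
  assert (H2 := erf_comp _ z _ (dQ_z s b c t z Hs Ht)).
  assert (H3 := dE_z s b c t z).
  assert (H4 := is_derive_minus (fun _ => 1) _ z _ _ (is_derive_const 1 z) H2).
  assert (H5 := is_derive_mult _ _ z _ _ H3 H4 Rmult_comm).
  assert (H6 := is_derive_plus _ _ z _ _ H1 H5).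
  eapply is_derive_eq. apply (is_derive_ext _ _ z _ (fun y => eq_refl) H6).
  cbv beta. rewrite <- (ident s b c t z Hs Ht).
  assert (Ha : 0 < s * sqrt (2 * t)) by (apply Rmult_lt_0_compat; auto; apply sqrt_lt_R0; lra).
  set (a := s * sqrt (2 * t)) in *. clearbody a.
  set (X := Exf s b c t z). set (G := exp (- Qf s b c t z ^ 2)). set (eQ := erf (Qf s b c t z)).
  simplR. req. assert (HPI := sqrtPI_pos). field. lra.
Qed.

Definition gP s c t z := 2 / sqrt PI * exp (- (Pf s c t z) ^ 2).
Definition Vzf s b c t z := - b * Exf s b c t z * (1 - erf (Qf s b c t z)).
Definition Vzzf s b c t z := b ^ 2 * Exf s b c t z * (1 - erf (Qf s b c t z))
   + b * gP s c t z / (s * sqrt (2 * t)).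
Definition Vtf s b c t z := b ^ 2 * s ^ 2 / 2 * Exf s b c t z * (1 - erf (Qf s b c t z))
   + gP s c t z * (b * s / (2 * sqrt (2 * t))).

Lemma dVz_z : forall s b c t z, 0 < s -> 0 < t ->
  is_derive (fun y => Vzf s b c t y) z (Vzzf s b c t z).
Proof.
  intros s b c t z Hs Ht.
  assert (H2 := erf_comp _ z _ (dQ_z s b c t z Hs Ht)).
  assert (H3 := dE_z s b c t z).
  assert (H4 := is_derive_minus (fun _ => 1) _ z _ _ (is_derive_const 1 z) H2).
  assert (H5 := is_derive_mult _ _ z _ _ H3 H4 Rmult_comm).
  assert (H6 := is_derive_scal _ z (- b) _ H5).
  eapply is_derive_eq. eapply is_derive_ext; [|exact H6].
  intros y. cbv beta. unfold Vzf. simplR. req. ring.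
  cbv beta. unfold Vzzf, gP. rewrite <- (ident s b c t z Hs Ht).
  assert (Ha : 0 < s * sqrt (2 * t)) by (apply Rmult_lt_0_compat; auto; apply sqrt_lt_R0; lra).
  set (a := s * sqrt (2 * t)) in *. clearbody a.
  set (X := Exf s b c t z). set (G := exp (- Qf s b c t z ^ 2)). set (eQ := erf (Qf s b c t z)).
  simplR. req. assert (HPI := sqrtPI_pos). field. lra.
Qed.

Lemma dV_z' : forall s b c t z, 0 < s -> 0 < t ->
  is_derive (fun y => Vf s b c t y) z (Vzf s b c t z).
Proof. intros; apply dV_z; auto. Qed.

Lemma dP_t : forall s c t z, 0 < s -> 0 < t ->
  is_derive (fun r => Pf s c r z) t (- Pf s c t z / (2 * t)).
Proof.
  intros s c t z Hs Ht. assert (H2 : 0 < sqrt (2 * t)) by (apply sqrt_lt_R0; lra).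
  assert (H3 : sqrt (2 * t) * sqrt (2 * t) = 2 * t) by (apply sqrt_sqrt; lra).
  unfold Pf. auto_derive. split. lra. split; [nra|auto].
  set (r := sqrt (2 * t)) in *. clearbody r.
  replace t with (r * r / 2) by lra. field. lra.
Qed.

Lemma dQ_t : forall s b c t z, 0 < s -> 0 < t ->
  is_derive (fun r => Qf s b c r z) t (- Pf s c t z / (2 * t) - b * s / (2 * sqrt (2 * t))).
Proof.
  intros s b c t z Hs Ht. assert (H2 : 0 < sqrt (2 * t)) by (apply sqrt_lt_R0; lra).
  assert (H3 : sqrt (2 * t) * sqrt (2 * t) = 2 * t) by (apply sqrt_sqrt; lra).
  unfold Qf, Pf. auto_derive. repeat split; try lra; nra.
  set (r := sqrt (2 * t)) in *. clearbody r.
  replace t with (r * r / 2) by lra. field. lra.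
Qed.

Lemma dE_t : forall s b c t z,
  is_derive (fun r => Exf s b c r z) t (b ^ 2 * s ^ 2 / 2 * Exf s b c t z).
Proof.
  intros s b c t z. unfold Exf.
  eapply is_derive_eq.
  apply (exp_comp (fun r => - b * (z - c) + b ^ 2 * s ^ 2 * r / 2)).
  auto_derive. auto. reflexivity. req; field.
Qed.

Lemma dV_t : forall s b c t z, 0 < s -> 0 < t ->
  is_derive (fun r => Vf s b c r z) t (Vtf s b c t z).
Proof.
  intros s b c t z Hs Ht.
  assert (H1 := erf_comp _ t _ (dP_t s c t z Hs Ht)).
  assert (H2 := erf_comp _ t _ (dQ_t s b c t z Hs Ht)).
  assert (H3 := dE_t s b c t z).
  assert (H4 := is_derive_minus (fun _ => 1) _ t _ _ (is_derive_const 1 t) H2).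
  assert (H5 := is_derive_mult _ _ t _ _ H3 H4 Rmult_comm).
  assert (H6 := is_derive_plus _ _ t _ _ H1 H5).
  eapply is_derive_eq. apply (is_derive_ext _ _ t _ (fun y => eq_refl) H6).
  cbv beta. unfold Vtf, gP. rewrite <- (ident s b c t z Hs Ht).
  assert (H7 : 0 < sqrt (2 * t)) by (apply sqrt_lt_R0; lra).
  set (r := sqrt (2 * t)) in *. clearbody r.
  set (X := Exf s b c t z). set (G := exp (- Qf s b c t z ^ 2)). set (eQ := erf (Qf s b c t z)).
  set (P := Pf s c t z).
  simplR. req. assert (HPI := sqrtPI_pos). field. lra.
Qed.

Lemma V_pos : forall s b c t z, 0 < s -> 0 < b -> 0 < t -> 0 < Vf s b c t z.
Proof.
  intros s b c t z Hs Hb Ht.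
  assert (Ha : 0 < s * sqrt (2 * t)) by (apply Rmult_lt_0_compat; auto; apply sqrt_lt_R0; lra).
  assert (HX : 0 < Exf s b c t z) by apply exp_pos.
  assert (HbQ := erf_bound (Qf s b c t z)).
  assert (HbP := erf_bound (Pf s c t z)).
  unfold Vf. destruct (Rlt_or_le 0 (z - c)) as [Hz|Hz].
  - assert (HP : 0 < Pf s c t z) by (unfold Pf; apply Rdiv_lt_0_compat; auto).
    assert (H := erf_pos _ HP). nra.
  - assert (HP : Pf s c t z <= 0).
    { unfold Pf, Rdiv. assert (0 < / (s * sqrt (2 * t))) by (apply Rinv_0_lt_compat; auto). nra. }
    assert (HQ : Qf s b c t z <= 0).
    { unfold Qf. assert (0 < b * s * sqrt (2 * t) / 2).
      { assert (0 < sqrt (2 * t)) by (apply sqrt_lt_R0; lra).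
        apply Rdiv_lt_0_compat; [|lra]. apply Rmult_lt_0_compat; auto. apply Rmult_lt_0_compat; auto. }
      lra. }
    assert (H := erf_nonpos _ HQ).
    assert (HX1 : 1 < Exf s b c t z).
    { unfold Exf. assert (0 < - b * (z - c) + b ^ 2 * s ^ 2 * t / 2).
      { assert (0 < b ^ 2 * s ^ 2 * t / 2).
        { apply Rdiv_lt_0_compat; [|lra]. apply Rmult_lt_0_compat; auto.
          apply Rmult_lt_0_compat; apply pow_lt; auto. }
        nra. }
      assert (H1 := exp_ineq1 (- b * (z - c) + b ^ 2 * s ^ 2 * t / 2)). lra. }
    nra.
Qed.

Lemma heat : forall s b c t z, 0 < s -> 0 < t ->
  Vtf s b c t z = s ^ 2 / 2 * Vzzf s b c t z.
Proof.
  intros s b c t z Hs Ht. unfold Vtf, Vzzf.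
  assert (H7 : 0 < sqrt (2 * t)) by (apply sqrt_lt_R0; lra).
  set (r := sqrt (2 * t)) in *. clearbody r. field. lra.
Qed.

Theorem proposition3p2 (sigma gamma kappa T c : R) :
  0 < sigma -> 0 < gamma -> 0 < kappa -> 0 < T ->
  (forall t z, 0 < t <= T -> c <= z ->
     ex_derive (fun s => U sigma gamma kappa c s z) t /\
     ex_derive (fun y => U sigma gamma kappa c t y) z /\
     ex_derive (fun y => dzU sigma gamma kappa c t y) z /\
     dtU sigma gamma kappa c t z =
       sigma ^ 2 / 2 * dzzU sigma gamma kappa c t z
       + gamma ^ 2 / (4 * kappa) * (dzU sigma gamma kappa c t z) ^ 2) /\
  (forall t, 0 < t <= T -> dzU sigma gamma kappa c t c = -1).
Proof.
  intros Hs Hg Hk HT.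
  assert (Hb : 0 < beta sigma gamma kappa).
  { unfold beta. apply Rdiv_lt_0_compat. apply pow_lt; auto.
    apply Rmult_lt_0_compat; [lra| apply pow_lt; auto]. }
  assert (Hbg : gamma ^ 2 = beta sigma gamma kappa * (2 * kappa * sigma ^ 2)).
  { unfold beta. field. split; lra. }
  set (b := beta sigma gamma kappa) in *.
  assert (HUz : forall t y, 0 < t -> is_derive (fun y => U sigma gamma kappa c t y) y
                  (/ b * (Vzf sigma b c t y * / Vf sigma b c t y))).
  { intros t y Ht. eapply is_derive_ext. intros; symmetry; apply U_eq.
    apply is_derive_scal. apply ln_comp. apply dV_z'; auto. apply V_pos; auto. }
  assert (HdzU : forall t y, 0 < t -> dzU sigma gamma kappa c t y = / b * (Vzf sigma b c t y * / Vf sigma b c t y)).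
  { intros t y Ht. unfold dzU. apply is_derive_unique, HUz; auto. }
  split.
  - intros t z [Ht HtT] Hz.
    assert (HUt : is_derive (fun r => U sigma gamma kappa c r z) t
                  (/ b * (Vtf sigma b c t z * / Vf sigma b c t z))).
    { apply is_derive_ext with (f := fun r => / b * ln (Vf sigma b c r z)). intros; symmetry; apply U_eq.
      apply is_derive_scal. apply (ln_comp (fun r => Vf sigma b c r z)). apply dV_t; auto. apply V_pos; auto. }
    assert (HV := V_pos sigma b c t z Hs Hb Ht).
    assert (HUzz : is_derive (fun y => dzU sigma gamma kappa c t y) z
        (/ b * ((Vzzf sigma b c t z * Vf sigma b c t z - Vzf sigma b c t z * Vzf sigma b c t z)
                / Vf sigma b c t z ^ 2))).
    { apply is_derive_ext with (f := fun y => / b * (Vzf sigma b c t y * / Vf sigma b c t y)).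
      intros y; symmetry; apply HdzU; auto.
      apply is_derive_scal.
      eapply is_derive_eq. apply is_derive_div. apply dVz_z; auto. apply dV_z'; auto. lra.
      req. field. lra. }
    split; [eexists; exact HUt|].
    split; [eexists; apply HUz; auto|].
    split; [eexists; exact HUzz|].
    assert (E1 : dtU sigma gamma kappa c t z = / b * (Vtf sigma b c t z * / Vf sigma b c t z))
      by (apply is_derive_unique; exact HUt).
    assert (E2 : dzzU sigma gamma kappa c t z = / b * ((Vzzf sigma b c t z * Vf sigma b c t z - Vzf sigma b c t z * Vzf sigma b c t z)
                / Vf sigma b c t z ^ 2)) by (apply is_derive_unique; exact HUzz).
    rewrite E1, E2, HdzU by auto.
    rewrite (heat sigma b c t z Hs Ht), Hbg. field. lra.
  - intros t [Ht HtT]. rewrite HdzU by auto.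
    assert (HV := V_pos sigma b c t c Hs Hb Ht).
    unfold Vzf. unfold Vf in *.
    assert (HP : Pf sigma c t c = 0) by (unfold Pf; unfold Rdiv; ring).
    rewrite HP, erf_0 in *. assert (HX : 0 < Exf sigma b c t c) by apply exp_pos. field. repeat split; try lra. intro H0; rewrite H0 in HV; lra.
Qed.
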